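(* Let $a\in\mathbb{R}$, $b\in(a,\infty)$, $h\in\mathbb{N}$, $v_1,\dots,v_h,w_1,\dots,w_h\in(0,\infty)$, let $f,p\in C(\mathbb{R},\mathbb{R})$ satisfy for all $x\in\mathbb{R}$ that $p(x)\ge0$ and $p^{-1}((0,\infty))=(a,b)$, with $\mathcal{L}$ and $I_k^\theta$ as in the context. Let $\Theta\in C([0,\infty),\mathbb{R}^{h+1})$ satisfy for all $t\in[0,\infty)$ that $\Theta_t=\Theta_0-\int_0^t(\nabla\mathcal{L})(\Theta_s)\,\mathrm{d}s$, and let $k\in\{1,\dots,h\}$ satisfy $I_k^{\Theta_0}\neq\emptyset$. Then for all $t\in[0,\infty)$ it holds that $I_k^{\Theta_t}\neq\emptyset$.
   Context: Let $\mathfrak{c}(x)=\min\{\max\{x,0\},1\}$. For $\theta=(\theta_1,\dots,\theta_{h+1})\in\mathbb{R}^{h+1}$ and $i\in\{1,\dots,h\}$ let $\psi_i(\theta)=-[w_i]^{-1}\theta_i$, $I_i^\theta=(\psi_i(\theta),\psi_i(\theta)+[w_i]^{-1})\cap(a,b)$, $\mathcal{N}^\theta(x)=\theta_{h+1}+\sum_{i=1}^hv_i\mathfrak{c}(w_ix+\theta_i)$, and $\mathcal{L}(\theta)=\int_a^b(\mathcal{N}^\theta(x)-f(x))^2p(x)\,\mathrm{d}x$ ($\mathcal{L}$ is continuously differentiable). *)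

(* Defs.v *)
From Stdlib Require Import Reals List.
From Coquelicot Require Import Coquelicot.
Open Scope R_scope.

(* Parameter vectors theta in R^{h+1} are represented as functions nat -> R,
   using the 1-based components theta 1, ..., theta (h+1); other indices are
   irrelevant (nothing below depends on them). *)

Definition clip (x : R) : R := Rmin (Rmax x 0) 1.

Definition Nnet (h : nat) (v w : nat -> R) (theta : nat -> R) (x : R) : R :=
  theta (S h) + fold_right Rplus 0
    (map (fun i => v i * clip (w i * x + theta i)) (seq 1 h)).

Definition Loss (a b : R) (h : nat) (v w : nat -> R) (f p : R -> R)
  (theta : nat -> R) : R :=
  RInt (fun x => (Nnet h v w theta x - f x) ^ 2 * p x) a b.

Definition upd (theta : nat -> R) (i : nat) (s : R) : nat -> R :=
  fun j => if Nat.eqb j i then theta j + s else theta j.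

(* i-th component of the gradient of L (partial derivative; L is C^1) *)
Definition gradL (a b : R) (h : nat) (v w : nat -> R) (f p : R -> R)
  (theta : nat -> R) (i : nat) : R :=
  Derive (fun s => Loss a b h v w f p (upd theta i s)) 0.

Definition psi (w : nat -> R) (theta : nat -> R) (i : nat) : R :=
  - (/ w i) * theta i.

Definition Iset (a b : R) (w : nat -> R) (theta : nat -> R) (i : nat) (x : R) : Prop :=
  psi w theta i < x < psi w theta i + / w i /\ a < x < b.

(* Main.v *)
Require Import Defs.
From Stdlib Require Import Reals List Lra Lia.
From Coquelicot Require Import Coquelicot.
Open Scope R_scope.

Lemma clip_lip x y : Rabs (clip x - clip y) <= Rabs (x - y).
Proof. unfold clip, Rmin, Rmax.
  repeat (destruct Rle_dec); unfold Rabs; repeat destruct Rcase_abs; lra. Qed.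
Lemma clip_0 x : x <= 0 -> clip x = 0.
Proof. unfold clip, Rmin, Rmax. intros; repeat (destruct Rle_dec); lra. Qed.
Lemma clip_1 x : 1 <= x -> clip x = 1.
Proof. unfold clip, Rmin, Rmax. intros; repeat (destruct Rle_dec); lra. Qed.
Lemma clip_id x : 0 <= x <= 1 -> clip x = x.
Proof. unfold clip, Rmin, Rmax. intros; repeat (destruct Rle_dec); lra. Qed.
Lemma clip_bnd x : 0 <= clip x <= 1.
Proof. unfold clip, Rmin, Rmax. intros; repeat (destruct Rle_dec); lra. Qed.

Lemma clip_cont x : continuity_pt clip x.
Proof.
  unfold continuity_pt, continue_in, limit1_in, limit_in. intros eps He.
  exists eps; split; auto. intros y [_ Hy]. simpl in *. unfold R_dist in *.
  eapply Rle_lt_trans; [apply clip_lip|auto]. Qed.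

Definition sumL (l : list nat) (F : nat -> R) := fold_right Rplus 0 (map F l).

Lemma sumL_app l1 l2 F : sumL (l1 ++ l2) F = sumL l1 F + sumL l2 F.
Proof. induction l1; simpl; unfold sumL in *; simpl; try rewrite IHl1; lra. Qed.

Lemma sumL_cons a l F : sumL (a :: l) F = F a + sumL l F.
Proof. reflexivity. Qed.

Lemma sumL_ext l F G : (forall i, In i l -> F i = G i) -> sumL l F = sumL l G.
Proof. induction l; simpl; auto. intros H; unfold sumL in *; simpl.
  rewrite H by auto. rewrite IHl; auto. Qed.

Lemma sumL_le l F G : (forall i, In i l -> F i <= G i) -> sumL l F <= sumL l G.
Proof. induction l; simpl; intros; unfold sumL in *; simpl; try lra.
  specialize (IHl (fun i Hi => H i (or_intror Hi))). specialize (H a (or_introl eq_refl)). lra. Qed.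

Lemma sumL_abs l F : Rabs (sumL l F) <= sumL l (fun i => Rabs (F i)).
Proof. induction l; unfold sumL in *; simpl. rewrite Rabs_R0; lra.
  eapply Rle_trans; [apply Rabs_triang|]. lra. Qed.

Lemma sumL_minus l F G : sumL l F - sumL l G = sumL l (fun i => F i - G i).
Proof. induction l; unfold sumL in *; simpl; lra. Qed.

Lemma sumL_nonneg l F : (forall i, 0 <= F i) -> 0 <= sumL l F.
Proof. intros; induction l; unfold sumL in *; simpl; auto with real.
  specialize (H a); lra. Qed.

Lemma sumL_cont l (F : nat -> R -> R) x :
  (forall i, continuity_pt (F i) x) -> continuity_pt (fun y => sumL l (fun i => F i y)) x.
Proof. intros H; induction l; unfold sumL in *; simpl.
  apply continuity_pt_const; intros ? ?; auto.
  apply continuity_pt_plus; auto. Qed.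

Definition term (v w : nat -> R) (th : nat -> R) (x : R) (i : nat) := v i * clip (w i * x + th i).

Lemma Nnet_eq h v w th x : Nnet h v w th x = th (S h) + sumL (seq 1 h) (term v w th x).
Proof. reflexivity. Qed.

Lemma Nnet_upd h v w th k s x : (1 <= k <= h)%nat ->
  Nnet h v w (upd th k s) x = Nnet h v w th x + v k * (clip (w k * x + th k + s) - clip (w k * x + th k)).
Proof.
  intros Hk. rewrite !Nnet_eq.
  assert (E : seq 1 h = seq 1 (k-1) ++ k :: seq (S k) (h - k)).
  { replace h with ((k-1) + S (h-k))%nat at 1 by lia. rewrite seq_app. f_equal. replace (1 + (k-1))%nat with k by lia. reflexivity. }
  assert (Hsh : upd th k s (S h) = th (S h)).
  { unfold upd. replace (Nat.eqb (S h) k) with false; auto. symmetry; apply Nat.eqb_neq; lia. }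
  rewrite Hsh, E, !sumL_app, !sumL_cons.
  assert (H1 : sumL (seq 1 (k-1)) (term v w (upd th k s) x) = sumL (seq 1 (k-1)) (term v w th x)).
  { apply sumL_ext. intros i Hi. apply in_seq in Hi. unfold term, upd.
    replace (Nat.eqb i k) with false; auto. symmetry; apply Nat.eqb_neq; lia. }
  assert (H2 : sumL (seq (S k) (h-k)) (term v w (upd th k s) x) = sumL (seq (S k) (h-k)) (term v w th x)).
  { apply sumL_ext. intros i Hi. apply in_seq in Hi. unfold term, upd.
    replace (Nat.eqb i k) with false; auto. symmetry; apply Nat.eqb_neq; lia. }
  rewrite H1, H2.
  unfold term, upd. rewrite Nat.eqb_refl. ring_simplify.
  replace (w k * x + (th k + s)) with (w k * x + th k + s) by ring. ring.
Qed.

Definition Vs h (v : nat -> R) := sumL (seq 1 h) (fun i => Rabs (v i)).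

Lemma Nnet_bound h v w th x : Rabs (Nnet h v w th x) <= Rabs (th (S h)) + Vs h v.
Proof.
  rewrite Nnet_eq. eapply Rle_trans; [apply Rabs_triang|].
  apply Rplus_le_compat_l. eapply Rle_trans; [apply sumL_abs|]. apply sumL_le.
  intros i _. unfold term. rewrite Rabs_mult. pose proof (clip_bnd (w i * x + th i)).
  rewrite (Rabs_right (clip _)) by lra. pose proof (Rabs_pos (v i)). nra. Qed.

Lemma Nnet_diff h v w th th' x : Rabs (Nnet h v w th x - Nnet h v w th' x) <=
  Rabs (th (S h) - th' (S h)) + sumL (seq 1 h) (fun i => Rabs (v i) * Rabs (th i - th' i)).
Proof.
  rewrite !Nnet_eq. replace (th (S h) + sumL (seq 1 h) (term v w th x) -
    (th' (S h) + sumL (seq 1 h) (term v w th' x))) with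
    ((th (S h) - th' (S h)) + (sumL (seq 1 h) (term v w th x) - sumL (seq 1 h) (term v w th' x))) by ring.
  eapply Rle_trans; [apply Rabs_triang|]. apply Rplus_le_compat_l.
  rewrite sumL_minus. eapply Rle_trans; [apply sumL_abs|]. apply sumL_le.
  intros i _. unfold term. rewrite <- Rmult_minus_distr_l, Rabs_mult.
  apply Rmult_le_compat_l; [apply Rabs_pos|]. eapply Rle_trans; [apply clip_lip|].
  right; f_equal; ring. Qed.

Lemma Nnet_cont h v w th x : continuity_pt (Nnet h v w th) x.
Proof.
  assert (E : Nnet h v w th = fun y => th (S h) + sumL (seq 1 h) (fun i => term v w th y i)) by reflexivity.
  rewrite E. apply continuity_pt_plus. apply continuity_pt_const; intros ? ?; auto.
  apply sumL_cont. intros i. unfold term. apply continuity_pt_mult.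
  apply continuity_pt_const; intros ? ?; auto.
  apply (continuity_pt_comp (fun y => w i * y + th i) clip).
  apply continuity_pt_plus. apply continuity_pt_mult. apply continuity_pt_const; intros ? ?; auto.
  apply continuity_pt_id. apply continuity_pt_const; intros ? ?; auto. apply clip_cont.
Qed.
Definition contF (F : R -> R) := forall x, continuity_pt F x.

Lemma exRI F c d : contF F -> ex_RInt F c d.
Proof. intros H; apply (@ex_RInt_continuous R_CompleteNormedModule); intros z _; apply continuity_pt_filterlim, H. Qed.

Lemma chasles F x y z : contF F -> RInt F x y + RInt F y z = RInt F x z.
Proof. intros H. rewrite <- (RInt_Chasles F x y z) by (apply exRI; auto). reflexivity. Qed.

Lemma RInt_zero F c d : (forall x, Rmin c d < x < Rmax c d -> F x = 0) -> RInt F c d = 0.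
Proof. intros H. rewrite (RInt_ext F (fun _ => 0)) by auto. rewrite RInt_const.
  unfold scal; simpl; unfold mult; simpl; ring. Qed.

Lemma RInt_bnd F c d E : contF F -> (forall x, Rmin c d <= x <= Rmax c d -> Rabs (F x) <= E) ->
  Rabs (RInt F c d) <= E * Rabs (d - c).
Proof.
  intros HF H. destruct (Rle_dec c d).
  - rewrite (Rabs_right (d - c)) by lra. rewrite Rmult_comm. apply abs_RInt_le_const; auto. apply exRI; auto.
    intros t Ht; apply H. rewrite Rmin_left, Rmax_right; lra.
  - apply Rnot_le_lt in n. rewrite <- opp_RInt_swap by (apply exRI; auto).
    change (Rabs (- RInt F d c) <= E * Rabs (d - c)). rewrite Rabs_Ropp.
    rewrite (Rabs_left (d - c)) by lra. replace (- (d - c)) with (c - d) by ring. rewrite Rmult_comm.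
    apply abs_RInt_le_const; try lra. apply exRI; auto.
    intros t Ht; apply H. rewrite Rmin_right, Rmax_left; lra.
Qed.

Lemma RInt_zero2 F c d E m1 m2 : c <= d -> contF F ->
  (forall x, c <= x <= d -> Rabs (F x) <= E) ->
  (forall x, c <= x <= d -> m1 <= x <= m2 -> F x = 0) ->
  Rabs (RInt F c d) <= E * (Rmax 0 (m1 - c) + Rmax 0 (d - m2)).
Proof.
  intros Hcd HF HB HZ.
  assert (HE : 0 <= E) by (specialize (HB c); pose proof (Rabs_pos (F c)); lra).
  set (p1 := Rmax c (Rmin d m1)). set (p2 := Rmax c (Rmin d (Rmax m1 m2))).
  assert (Hp1 : c <= p1 <= d) by (unfold p1, Rmax, Rmin; repeat destruct Rle_dec; lra).
  assert (Hp2 : p1 <= p2 <= d) by (unfold p1, p2, Rmax, Rmin; repeat destruct Rle_dec; lra).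
  rewrite <- (chasles F c p1 d), <- (chasles F p1 p2 d) by auto.
  rewrite (RInt_zero F p1 p2).
  2:{ intros x Hx. rewrite Rmin_left, Rmax_right in Hx by lra. apply HZ. lra.
      unfold p1, p2, Rmax, Rmin in *; repeat destruct Rle_dec; lra. }
  assert (A1 : Rabs (RInt F c p1) <= E * Rabs (p1 - c)).
  { apply RInt_bnd; auto. intros x Hx; apply HB. rewrite Rmin_left, Rmax_right in Hx; lra. }
  assert (A2 : Rabs (RInt F p2 d) <= E * Rabs (d - p2)).
  { apply RInt_bnd; auto. intros x Hx; apply HB. rewrite Rmin_left, Rmax_right in Hx; lra. }
  assert (B1 : Rabs (p1 - c) <= Rmax 0 (m1 - c)).
  { rewrite Rabs_right by lra. unfold p1, Rmax, Rmin; repeat destruct Rle_dec; lra. }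
  assert (B2 : Rabs (d - p2) <= Rmax 0 (d - m2)).
  { rewrite Rabs_right by lra. unfold p2, Rmax, Rmin; repeat destruct Rle_dec; lra. }
  eapply Rle_trans. 
  replace (RInt F c p1 + (0 + RInt F p2 d)) with (RInt F c p1 + RInt F p2 d) by ring.
  apply Rabs_triang. 
  pose proof (Rmult_le_compat_l E _ _ HE B1). pose proof (Rmult_le_compat_l E _ _ HE B2). lra.
Qed.

Lemma clipc F x : continuity_pt F x -> continuity_pt (fun y => clip (F y)) x.
Proof. intros H. apply (continuity_pt_comp F clip); auto. apply clip_cont. Qed.

Definition clampab (a b c : R) := Rmax a (Rmin b c).

Definition gk h (v w : nat -> R) (f p : R -> R) th k x := 2 * v k * (Nnet h v w th x - f x) * p x.

Definition Dk a b h v w f p th k :=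
  RInt (gk h v w f p th k) (clampab a b (- th k / w k)) (clampab a b ((1 - th k) / w k)).

Definition Mg h v (Mf Mp : R) (th : nat -> R) k := 2 * v k * (Rabs (th (S h)) + Vs h v + Mf) * Mp.

Definition Del (w : nat -> R) th k s x := clip (w k * x + th k + s) - clip (w k * x + th k).

Lemma Del_cont w th k s : contF (Del w th k s).
Proof. unfold Del. intros x. apply continuity_pt_minus; apply clipc;
  repeat first [apply continuity_pt_plus | apply continuity_pt_mult | apply continuity_pt_id |
   (apply continuity_pt_const; intros ? ?; reflexivity)]. Qed.

Lemma gk_cont h v w f p th k : contF f -> contF p -> contF (gk h v w f p th k).
Proof. intros Hf Hp. unfold gk. intros x. repeat first [apply Nnet_cont | apply Hf | apply Hp | apply continuity_pt_mult | apply continuity_pt_minus | (apply continuity_pt_const; intros ? ?; reflexivity)]. Qed.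

Ltac cont_step Hf Hp :=
  first [ apply Nnet_cont | apply Hf | apply Hp | apply Del_cont | apply gk_cont; [apply Hf | apply Hp]
        | apply continuity_pt_plus | apply continuity_pt_minus | apply continuity_pt_mult
        | apply continuity_pt_opp | apply continuity_pt_id | apply clipc
        | (apply continuity_pt_const; intros ? ?; reflexivity) ].
Ltac cont Hf Hp := let x := fresh in intros x; repeat (cont_step Hf Hp).

Lemma gk_bound a b h v w f p th k Mf Mp x : 0 < v k ->
  (forall x, a <= x <= b -> Rabs (f x) <= Mf) -> (forall x, a <= x <= b -> Rabs (p x) <= Mp) ->
  a <= x <= b -> Rabs (gk h v w f p th k x) <= Mg h v Mf Mp th k.
Proof.
  intros Hv Hf Hp Hx. unfold gk, Mg. rewrite !Rabs_mult. rewrite (Rabs_right 2) by lra.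
  rewrite (Rabs_right (v k)) by lra.
  pose proof (Nnet_bound h v w th x). pose proof (Hf x Hx). pose proof (Hp x Hx).
  assert (Rabs (Nnet h v w th x - f x) <= Rabs (th (S h)) + Vs h v + Mf).
  { unfold Rminus. eapply Rle_trans; [apply Rabs_triang|]. rewrite Rabs_Ropp. lra. }
  pose proof (Rabs_pos (p x)). pose proof (Rabs_pos (Nnet h v w th x - f x)).
  apply Rmult_le_compat; try nra. 
Qed.

Lemma Del_bnd w th k s x : Rabs (Del w th k s x) <= Rabs s.
Proof. unfold Del. eapply Rle_trans; [apply clip_lip|]. right; f_equal; ring. Qed.

Lemma Del_bnd2 w th k s x : Rabs (Del w th k s x - s) <= 2 * Rabs s.
Proof. unfold Rminus at 1. eapply Rle_trans; [apply Rabs_triang|]. rewrite Rabs_Ropp.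
  pose proof (Del_bnd w th k s x). lra. Qed.

Lemma Del_lo w th k s x : w k * x + th k <= - Rabs s -> Del w th k s x = 0.
Proof. intros H. unfold Del. pose proof (Rle_abs s). pose proof (Rle_abs (-s)). rewrite Rabs_Ropp in *.
  rewrite !clip_0 by lra. ring. Qed.

Lemma Del_hi w th k s x : 1 + Rabs s <= w k * x + th k -> Del w th k s x = 0.
Proof. intros H. unfold Del. pose proof (Rle_abs s). pose proof (Rle_abs (-s)). rewrite Rabs_Ropp in *.
  rewrite !clip_1 by lra. ring. Qed.

Lemma Del_mid w th k s x : Rabs s <= w k * x + th k <= 1 - Rabs s -> Del w th k s x = s.
Proof. intros H. unfold Del. pose proof (Rle_abs s). pose proof (Rle_abs (-s)). rewrite Rabs_Ropp in *.
  rewrite !clip_id by lra. ring. Qed.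

Lemma Del_0 w th k x : Del w th k 0 x = 0.
Proof. unfold Del. rewrite Rplus_0_r. ring. Qed.

Lemma clamp_facts a b W t : a < b -> 0 < W ->
  let al := clampab a b (- t / W) in let be := clampab a b ((1 - t) / W) in
  a <= al <= be /\ be <= b /\ (a < al -> W * al + t <= 0) /\ (be < b -> 1 <= W * be + t) /\
  (al < be -> 0 <= W * al + t /\ W * be + t <= 1).
Proof.
  intros Hab HW al be.
  assert (E1 : W * (- t / W) + t = 0) by (field; lra).
  assert (E2 : W * ((1 - t) / W) + t = 1) by (field; lra).
  set (c := - t / W) in *. set (c' := (1 - t) / W) in *.
  assert (Hc : c < c'). { apply (Rmult_lt_reg_l W); lra. }
  assert (M : forall u z, u <= z -> W * u <= W * z) by (intros; apply Rmult_le_compat_l; lra).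
  unfold al, be, clampab, Rmax, Rmin in *.
  repeat destruct Rle_dec; repeat split; intros; try lra;
  match goal with
  | |- W * ?u + t <= 0 => assert (u <= c) by lra; pose proof (M u c ltac:(lra)); lra
  | |- 1 <= W * ?u + t => pose proof (M c' u ltac:(lra)); lra
  | |- 0 <= W * ?u + t => pose proof (M c u ltac:(lra)); lra
  | |- W * ?u + t <= 1 => pose proof (M u c' ltac:(lra)); lra
  end.
Qed.

Lemma RInt_extR (F G : R -> R) c d : (forall x, F x = G x) -> RInt F c d = RInt G c d.
Proof. intros H. apply RInt_ext. intros; apply H. Qed.

Lemma RInt_sub F G c d : contF F -> contF G -> RInt F c d - RInt G c d = RInt (fun x => F x - G x) c d.
Proof. intros HF HG. rewrite (RInt_minus F G) by (apply exRI; auto). reflexivity. Qed.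

Lemma RInt_add F G c d : contF F -> contF G -> RInt F c d + RInt G c d = RInt (fun x => F x + G x) c d.
Proof. intros HF HG. rewrite (RInt_plus F G) by (apply exRI; auto). reflexivity. Qed.

Lemma RInt_cmul r F c d : contF F -> RInt (fun x => r * F x) c d = r * RInt F c d.
Proof. intros HF. pose proof (RInt_scal F c d r (exRI F c d HF)) as E. exact E. Qed.

Lemma deriv_est a b h v w f p th k Mf Mp s :
  a < b -> 0 < v k -> 0 < w k -> (1 <= k <= h)%nat -> contF f -> contF p ->
  (forall x, a <= x <= b -> Rabs (f x) <= Mf) -> (forall x, a <= x <= b -> Rabs (p x) <= Mp) ->
  Rabs (Loss a b h v w f p (upd th k s) - Loss a b h v w f p th - s * Dk a b h v w f p th k)
  <= (6 * Mg h v Mf Mp th k / w k + v k ^ 2 * Mp * (b - a)) * (s * s).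
Proof.
  intros Hab Hv Hw Hk Hf Hp HMf HMp.
  set (W := w k). set (V := v k). set (N0 := Nnet h v w th). set (g := gk h v w f p th k).
  set (D := Del w th k s). set (M := Mg h v Mf Mp th k).
  assert (HW0 : 0 < W) by exact Hw. assert (HV0 : 0 < V) by exact Hv.
  pose proof (clamp_facts a b W (th k) Hab Hw) as CF. simpl in CF.
  set (al := clampab a b (- th k / W)) in *. set (be := clampab a b ((1 - th k) / W)) in *.
  destruct CF as (C1 & C2 & C3 & C4 & C5).
  assert (HM : forall x, a <= x <= b -> Rabs (g x) <= M).
  { intros; apply (gk_bound a b); auto. }
  assert (M0 : 0 <= M). { pose proof (HM a ltac:(lra)). pose proof (Rabs_pos (g a)). lra. }
  assert (Mp0 : 0 <= Mp). { pose proof (HMp a ltac:(lra)). pose proof (Rabs_pos (p a)). lra. }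
  assert (Hs0 : 0 <= Rabs s) by apply Rabs_pos.
  assert (Ss : Rabs s * Rabs s = s * s). { rewrite <- Rabs_mult. apply Rabs_right. nra. }
  assert (Eq1 : Loss a b h v w f p (upd th k s) =
     RInt (fun x => (N0 x + V * D x - f x) * (N0 x + V * D x - f x) * p x) a b).
  { unfold Loss. apply RInt_extR. intros x. rewrite Nnet_upd by auto. unfold N0, V, D, Del. ring. }
  assert (Eq2 : Loss a b h v w f p th = RInt (fun x => (N0 x - f x) * (N0 x - f x) * p x) a b).
  { unfold Loss. apply RInt_extR. intros x. unfold N0. ring. }
  assert (Eq3 : Dk a b h v w f p th k = RInt g al be) by reflexivity.
  rewrite Eq1, Eq2, Eq3.
  rewrite RInt_sub by (unfold N0, D; cont Hf Hp).
  rewrite (RInt_extR _ (fun x => D x * g x + V ^ 2 * (D x * D x) * p x)).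
  2:{ intros x. unfold g, gk. fold N0. fold V. ring. }
  rewrite <- RInt_add by (unfold g, D; cont Hf Hp).
  rewrite <- (chasles _ a al b), <- (chasles _ al be b) by (unfold g, D; cont Hf Hp).
  assert (E4 : RInt (fun x => D x * g x) al be - s * RInt g al be =
               RInt (fun x => (D x - s) * g x) al be).
  { rewrite <- RInt_cmul by (unfold g; cont Hf Hp). rewrite RInt_sub by (unfold g, D; cont Hf Hp).
    apply RInt_extR; intros; ring. }
  set (R1 := RInt (fun x => D x * g x) a al).
  set (R2 := RInt (fun x => (D x - s) * g x) al be).
  set (R3 := RInt (fun x => D x * g x) be b).
  set (R4 := RInt (fun x => V ^ 2 * (D x * D x) * p x) a b).
  assert (Hsum : R1 + (RInt (fun x => D x * g x) al be + R3) + R4 - s * RInt g al be = R1 + R2 + R3 + R4).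
  { unfold R2; rewrite <- E4. ring. }
  rewrite Hsum.
  assert (HW : W * (Rabs s / W) = Rabs s) by (field; lra).
  assert (Hq : 0 <= Rabs s / W) by (apply Rdiv_le_0_compat; lra).
  assert (B1 : Rabs R1 <= (Rabs s * M) * (Rmax 0 (a - a) + Rmax 0 (al - (al - Rabs s / W)))).
  { apply RInt_zero2; try lra. unfold g, D; cont Hf Hp.
    - intros x Hx. rewrite Rabs_mult. apply Rmult_le_compat; try apply Rabs_pos. apply Del_bnd. apply HM; lra.
    - intros x Hx Hm. unfold D. destruct (Req_dec (Rabs s) 0) as [Z|Z].
      + assert (s = 0) by (destruct (Rcase_abs s); [rewrite Rabs_left in Z|rewrite Rabs_right in Z]; lra).
        subst s. rewrite Del_0. ring.
      + rewrite Del_lo. ring. fold W.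
        assert (a < al). { assert (0 < Rabs s / W) by (apply Rdiv_lt_0_compat; lra). lra. }
        specialize (C3 H). assert (W * x <= W * (al - Rabs s / W)) by (apply Rmult_le_compat_l; lra).
        nra. }
  assert (B3 : Rabs R3 <= (Rabs s * M) * (Rmax 0 ((be + Rabs s / W) - be) + Rmax 0 (b - b))).
  { apply RInt_zero2; try lra. unfold g, D; cont Hf Hp.
    - intros x Hx. rewrite Rabs_mult. apply Rmult_le_compat; try apply Rabs_pos. apply Del_bnd. apply HM; lra.
    - intros x Hx Hm. unfold D. destruct (Req_dec (Rabs s) 0) as [Z|Z].
      + assert (s = 0) by (destruct (Rcase_abs s); [rewrite Rabs_left in Z|rewrite Rabs_right in Z]; lra).
        subst s. rewrite Del_0. ring.
      + rewrite Del_hi. ring. fold W.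
        assert (be < b). { assert (0 < Rabs s / W) by (apply Rdiv_lt_0_compat; lra). lra. }
        specialize (C4 H). assert (W * (be + Rabs s / W) <= W * x) by (apply Rmult_le_compat_l; lra).
        nra. }
  assert (B2 : Rabs R2 <= (2 * Rabs s * M) * (Rmax 0 ((al + Rabs s / W) - al) + Rmax 0 (be - (be - Rabs s / W)))).
  { apply RInt_zero2; try lra. unfold g, D; cont Hf Hp.
    - intros x Hx. rewrite Rabs_mult. apply Rmult_le_compat; try apply Rabs_pos. apply Del_bnd2. apply HM; lra.
    - intros x Hx Hm. unfold D. destruct (Req_dec (Rabs s) 0) as [Z|Z].
      + assert (s = 0) by (destruct (Rcase_abs s); [rewrite Rabs_left in Z|rewrite Rabs_right in Z]; lra).
        subst s. rewrite Del_0. ring.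
      + rewrite Del_mid. ring. fold W.
        assert (al < be). { assert (0 < Rabs s / W) by (apply Rdiv_lt_0_compat; lra). lra. }
        specialize (C5 H). assert (W * (al + Rabs s / W) <= W * x) by (apply Rmult_le_compat_l; lra).
        assert (W * x <= W * (be - Rabs s / W)) by (apply Rmult_le_compat_l; lra).
        nra. }
  assert (B4 : Rabs R4 <= V ^ 2 * (s * s) * Mp * Rabs (b - a)).
  { apply RInt_bnd. unfold D; cont Hf Hp.
    intros x Hx. rewrite Rmin_left, Rmax_right in Hx by lra.
    rewrite !Rabs_mult. pose proof (Del_bnd w th k s x). fold D in H.
    rewrite (Rabs_right (V ^ 2)) by (apply Rle_ge, pow2_ge_0).
    pose proof (Rabs_pos (D x)). pose proof (HMp x Hx). pose proof (Rabs_pos (p x)).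
    pose proof (pow2_ge_0 V).
    assert (Rabs (D x) * Rabs (D x) <= s * s) by nra. 
    apply Rmult_le_compat; try nra. }
  rewrite (Rabs_right (b - a)) in B4 by lra.
  replace (Rmax 0 (a - a)) with 0 in B1 by (rewrite Rmax_left; lra).
  replace (Rmax 0 (al - (al - Rabs s / W))) with (Rabs s / W) in B1 by (rewrite Rmax_right; lra).
  replace (Rmax 0 (b - b)) with 0 in B3 by (rewrite Rmax_left; lra).
  replace (Rmax 0 (be + Rabs s / W - be)) with (Rabs s / W) in B3 by (rewrite Rmax_right; lra).
  replace (Rmax 0 (al + Rabs s / W - al)) with (Rabs s / W) in B2 by (rewrite Rmax_right; lra).
  replace (Rmax 0 (be - (be - Rabs s / W))) with (Rabs s / W) in B2 by (rewrite Rmax_right; lra).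
  assert (T : Rabs (R1 + R2 + R3 + R4) <= Rabs R1 + Rabs R2 + Rabs R3 + Rabs R4).
  { eapply Rle_trans; [apply Rabs_triang|]. eapply Rle_trans; [apply Rplus_le_compat_r, Rabs_triang|].
    eapply Rle_trans; [apply Rplus_le_compat_r, Rplus_le_compat_r, Rabs_triang|]. lra. }
  eapply Rle_trans; [apply T|].
  assert (K : Rabs s * M * (0 + Rabs s / W) = (M / W) * (s * s)).
  { rewrite <- Ss. field. lra. }
  assert (K2 : 2 * Rabs s * M * (Rabs s / W + Rabs s / W) = 4 * (M / W) * (s * s)).
  { rewrite <- Ss. field. lra. }
  assert (K3 : Rabs s * M * (Rabs s / W + 0) = (M / W) * (s * s)).
  { rewrite <- Ss. field. lra. }
  unfold V in *. unfold M, W in *.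
  replace ((6 * Mg h v Mf Mp th k / w k + v k ^ 2 * Mp * (b - a)) * (s * s)) with
    (Mg h v Mf Mp th k / w k * (s * s) + 4 * (Mg h v Mf Mp th k / w k) * (s * s) + Mg h v Mf Mp th k / w k * (s * s) + v k ^ 2 * (s * s) * Mp * (b - a)) by (field; lra).
  lra.
Qed.

Lemma bound_ex F c d : c <= d -> contF F -> exists M, forall x, c <= x <= d -> Rabs (F x) <= M.
Proof.
  intros Hcd HF. destruct (continuity_ab_maj (fun x => Rabs (F x)) c d Hcd) as [m [Hm _]].
  { intros y _. apply (continuity_pt_comp F Rabs). apply HF. apply Rcontinuity_abs. }
  exists (Rabs (F m)). auto.
Qed.

Lemma gradL_eq a b h v w f p th k :
  a < b -> 0 < v k -> 0 < w k -> (1 <= k <= h)%nat -> contF f -> contF p ->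
  gradL a b h v w f p th k = Dk a b h v w f p th k.
Proof.
  intros Hab Hv Hw Hk Hf Hp.
  destruct (bound_ex f a b ltac:(lra) Hf) as [Mf HMf].
  destruct (bound_ex p a b ltac:(lra) Hp) as [Mp HMp].
  pose proof (fun s => deriv_est a b h v w f p th k Mf Mp s Hab Hv Hw Hk Hf Hp HMf HMp) as E.
  set (C := 6 * Mg h v Mf Mp th k / w k + v k ^ 2 * Mp * (b - a)) in E.
  set (Phi := fun s => Loss a b h v w f p (upd th k s)).
  assert (E0 : Phi 0 = Loss a b h v w f p th).
  { specialize (E 0). unfold Phi. rewrite Rmult_0_r, Rmult_0_r, Rmult_0_l, Rminus_0_r in E.
    pose proof (Rabs_pos (Loss a b h v w f p (upd th k 0) - Loss a b h v w f p th)).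
    assert (Rabs (Loss a b h v w f p (upd th k 0) - Loss a b h v w f p th) = 0) by lra.
    apply Rabs_eq_0 in H0. lra. }
  unfold gradL. apply is_derive_unique. apply is_derive_Reals.
  assert (C0 : 0 <= C).
  { specialize (E 1). pose proof (Rabs_pos (Phi 1 - Loss a b h v w f p th - 1 * Dk a b h v w f p th k)).
    unfold Phi in H. lra. }
  intros eps Heps. exists (mkposreal (eps / (C + 1)) ltac:(apply Rdiv_lt_0_compat; lra)).
  intros h0 Hh0 Hd. simpl in Hd. change (Rabs ((Phi (0 + h0) - Phi 0) / h0 - Dk a b h v w f p th k) < eps). rewrite Rplus_0_l, E0.
  specialize (E h0). fold (Phi h0) in E.
  replace ((Phi h0 - Loss a b h v w f p th) / h0 - Dk a b h v w f p th k) with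
    ((Phi h0 - Loss a b h v w f p th - h0 * Dk a b h v w f p th k) / h0) by (field; auto).
  unfold Rdiv at 1. rewrite Rabs_mult, Rabs_inv.
  assert (Ha : 0 < Rabs h0) by (apply Rabs_pos_lt; auto).
  assert (Hs : h0 * h0 = Rabs h0 * Rabs h0). { rewrite <- Rabs_mult. rewrite Rabs_right; nra. }
  rewrite Hs in E.
  apply (Rmult_lt_reg_r (Rabs h0)); auto. rewrite Rmult_assoc, Rinv_l by lra. rewrite Rmult_1_r.
  assert (C * Rabs h0 < eps).
  { assert (Rabs h0 * (C + 1) < eps).
    { apply (Rmult_lt_compat_r (C+1)) in Hd; [|lra]. unfold Rdiv in Hd. rewrite Rmult_assoc, Rinv_l in Hd by lra. lra. }
    nra. }
  nra.
Qed.

Lemma aff_max W t u z : 0 < W -> W * Rmax u z + t = Rmax (W * u + t) (W * z + t).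
Proof. intros HW. unfold Rmax. destruct (Rle_dec u z), (Rle_dec (W*u+t) (W*z+t)); try reflexivity.
  - assert (u = z \/ u < z) as [->|] by lra. reflexivity. exfalso; apply n; nra.
  - exfalso. apply n. nra. Qed.
Lemma aff_min W t u z : 0 < W -> W * Rmin u z + t = Rmin (W * u + t) (W * z + t).
Proof. intros HW. unfold Rmin. destruct (Rle_dec u z), (Rle_dec (W*u+t) (W*z+t)); try reflexivity.
  - assert (u = z \/ u < z) as [->|] by lra. reflexivity. exfalso; apply n; nra.
  - exfalso. apply n. nra. Qed.

Lemma clamp_aff a b W t c : 0 < W -> W * clampab a b c + t = Rmax (W * a + t) (Rmin (W * b + t) (W * c + t)).
Proof. intros HW. unfold clampab. rewrite aff_max, aff_min by auto. reflexivity. Qed.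

Definition dd (A B u : R) := Rmax 0 (Rmin (u - A) (B - u)).

Lemma Dk_bound a b h v w f p th k Mf Mp :
  a < b -> 0 < v k -> 0 < w k -> contF f -> contF p ->
  (forall x, a <= x <= b -> Rabs (f x) <= Mf) -> (forall x, a <= x <= b -> Rabs (p x) <= Mp) ->
  Rabs (Dk a b h v w f p th k) <= Mg h v Mf Mp th k / w k * dd (- w k * b) (1 - w k * a) (th k).
Proof.
  intros Hab Hv Hw Hf Hp HMf HMp.
  pose proof (clamp_facts a b (w k) (th k) Hab Hw) as CF. simpl in CF.
  destruct CF as (C1 & C2 & _).
  set (al := clampab a b (- th k / w k)) in *. set (be := clampab a b ((1 - th k) / w k)) in *.
  unfold Dk. fold al be.
  eapply Rle_trans. apply RInt_bnd. apply gk_cont; auto.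
  intros x Hx. rewrite Rmin_left, Rmax_right in Hx by lra. apply (gk_bound a b); auto; lra.
  assert (E1 : w k * al + th k = Rmax (w k * a + th k) (Rmin (w k * b + th k) 0)).
  { unfold al. rewrite clamp_aff by auto. f_equal. f_equal. field. lra. }
  assert (E2 : w k * be + th k = Rmax (w k * a + th k) (Rmin (w k * b + th k) 1)).
  { unfold be. rewrite clamp_aff by auto. f_equal. f_equal. field. lra. }
  assert (Hab' : w k * a + th k < w k * b + th k) by nra.
  assert (Hd : w k * (be - al) <= dd (- w k * b) (1 - w k * a) (th k)).
  { replace (w k * (be - al)) with ((w k * be + th k) - (w k * al + th k)) by ring.
    rewrite E1, E2. unfold dd. set (A := w k * a + th k) in *. set (B := w k * b + th k) in *.
    replace (th k - - w k * b) with B by (unfold B; ring).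
    replace (1 - w k * a - th k) with (1 - A) by (unfold A; ring).
    unfold Rmax, Rmin; repeat destruct Rle_dec; lra. }
  rewrite Rabs_right by lra.
  assert (0 <= Mg h v Mf Mp th k).
  { pose proof (gk_bound a b h v w f p th k Mf Mp a Hv HMf HMp ltac:(lra)). pose proof (Rabs_pos (gk h v w f p th k a)). lra. }
  replace (Mg h v Mf Mp th k / w k * dd (- w k * b) (1 - w k * a) (th k)) with
    (Mg h v Mf Mp th k * (dd (- w k * b) (1 - w k * a) (th k) / w k)) by (field; lra).
  apply Rmult_le_compat_l; auto.
  apply (Rmult_le_reg_l (w k)); auto. replace (w k * (dd (- w k * b) (1 - w k * a) (th k) / w k)) with (dd (- w k * b) (1 - w k * a) (th k)) by (field; lra). auto.
Qed.

Lemma clamp_lip a b c c' : a <= b -> Rabs (clampab a b c - clampab a b c') <= Rabs (c - c').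
Proof. intros. unfold clampab, Rmax, Rmin; repeat destruct Rle_dec; unfold Rabs; repeat destruct Rcase_abs; lra. Qed.

Lemma clamp_in a b c : a <= b -> a <= clampab a b c <= b.
Proof. intros. unfold clampab, Rmax, Rmin; repeat destruct Rle_dec; lra. Qed.

Lemma Dk_lip a b h v w f p th th0 k Mf Mp :
  a < b -> 0 < v k -> 0 < w k -> contF f -> contF p ->
  (forall x, a <= x <= b -> Rabs (f x) <= Mf) -> (forall x, a <= x <= b -> Rabs (p x) <= Mp) ->
  Rabs (Dk a b h v w f p th k - Dk a b h v w f p th0 k) <=
  Mg h v Mf Mp th0 k * (2 * (Rabs (th k - th0 k) / w k)) +
  (b - a) * (2 * v k * Mp * (Rabs (th (S h) - th0 (S h)) + sumL (seq 1 h) (fun i => Rabs (v i) * Rabs (th i - th0 i)))).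
Proof.
  intros Hab Hv Hw Hf Hp HMf HMp.
  unfold Dk.
  set (al := clampab a b (- th k / w k)). set (be := clampab a b ((1 - th k) / w k)).
  set (al0 := clampab a b (- th0 k / w k)). set (be0 := clampab a b ((1 - th0 k) / w k)).
  set (g := gk h v w f p th k). set (g0 := gk h v w f p th0 k).
  assert (Ia : a <= al <= b) by (apply clamp_in; lra). assert (Ib : a <= be <= b) by (apply clamp_in; lra).
  assert (Ia0 : a <= al0 <= b) by (apply clamp_in; lra). assert (Ib0 : a <= be0 <= b) by (apply clamp_in; lra).
  assert (Gc : contF g) by (apply gk_cont; auto). assert (G0c : contF g0) by (apply gk_cont; auto).
  assert (E : RInt g al be - RInt g0 al0 be0 = RInt g0 al al0 + RInt g0 be0 be + RInt (fun x => g x - g0 x) al be).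
  { rewrite <- RInt_sub by auto. rewrite <- (chasles g0 al al0 be) by auto. rewrite <- (chasles g0 al0 be0 be) by auto. ring. }
  rewrite E.
  assert (HM0 : forall x, Rmin a b <= x <= Rmax a b -> Rabs (g0 x) <= Mg h v Mf Mp th0 k).
  { intros x Hx. rewrite Rmin_left, Rmax_right in Hx by lra. apply (gk_bound a b); auto. }
  assert (B1 : Rabs (RInt g0 al al0) <= Mg h v Mf Mp th0 k * Rabs (al0 - al)).
  { apply RInt_bnd; auto. intros x Hx. apply HM0. split.
    eapply Rle_trans; [|apply Hx]. rewrite (Rmin_left a b) by lra. apply Rmin_glb; lra.
    eapply Rle_trans; [apply Hx|]. rewrite (Rmax_right a b) by lra. apply Rmax_lub; lra. }
  assert (B2 : Rabs (RInt g0 be0 be) <= Mg h v Mf Mp th0 k * Rabs (be - be0)).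
  { apply RInt_bnd; auto. intros x Hx. apply HM0. split.
    eapply Rle_trans; [|apply Hx]. rewrite (Rmin_left a b) by lra. apply Rmin_glb; lra.
    eapply Rle_trans; [apply Hx|]. rewrite (Rmax_right a b) by lra. apply Rmax_lub; lra. }
  set (Q := 2 * v k * Mp * (Rabs (th (S h) - th0 (S h)) + sumL (seq 1 h) (fun i => Rabs (v i) * Rabs (th i - th0 i)))).
  assert (B3 : Rabs (RInt (fun x => g x - g0 x) al be) <= Q * Rabs (be - al)).
  { apply RInt_bnd. intros x; apply continuity_pt_minus; auto.
    intros x Hx. assert (Hx' : a <= x <= b).
    { split. eapply Rle_trans; [|apply Hx]. apply Rmin_glb; lra. eapply Rle_trans; [apply Hx|]. apply Rmax_lub; lra. }
    unfold g, g0, gk, Q.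
    replace (2 * v k * (Nnet h v w th x - f x) * p x - 2 * v k * (Nnet h v w th0 x - f x) * p x)
      with (2 * v k * (Nnet h v w th x - Nnet h v w th0 x) * p x) by ring.
    rewrite !Rabs_mult. rewrite (Rabs_right 2) by lra. rewrite (Rabs_right (v k)) by lra.
    pose proof (Nnet_diff h v w th th0 x). pose proof (HMp x Hx'). pose proof (Rabs_pos (p x)).
    pose proof (Rabs_pos (Nnet h v w th x - Nnet h v w th0 x)).
    assert (0 <= 2 * v k) by lra.
    replace (2 * v k * Rabs (Nnet h v w th x - Nnet h v w th0 x) * Rabs (p x)) with
       ((2 * v k) * (Rabs (Nnet h v w th x - Nnet h v w th0 x) * Rabs (p x))) by ring.
    replace (2 * v k * Mp * (Rabs (th (S h) - th0 (S h)) + sumL (seq 1 h) (fun i => Rabs (v i) * Rabs (th i - th0 i)))) with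
       ((2 * v k) * ((Rabs (th (S h) - th0 (S h)) + sumL (seq 1 h) (fun i => Rabs (v i) * Rabs (th i - th0 i))) * Mp)) by ring.
    apply Rmult_le_compat_l; auto. apply Rmult_le_compat; auto. }
  assert (L1 : Rabs (al0 - al) <= Rabs (th k - th0 k) / w k).
  { eapply Rle_trans. apply clamp_lip; lra. right.
    replace (- th0 k / w k - - th k / w k) with ((th k - th0 k) / w k) by (field; lra).
    unfold Rdiv. rewrite Rabs_mult, Rabs_inv, (Rabs_right (w k)) by lra. reflexivity. }
  assert (L2 : Rabs (be - be0) <= Rabs (th k - th0 k) / w k).
  { eapply Rle_trans. apply clamp_lip; lra. right.
    replace ((1 - th k) / w k - (1 - th0 k) / w k) with (- ((th k - th0 k) / w k)) by (field; lra).
    rewrite Rabs_Ropp. unfold Rdiv. rewrite Rabs_mult, Rabs_inv, (Rabs_right (w k)) by lra. reflexivity. }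
  assert (Mg0 : 0 <= Mg h v Mf Mp th0 k).
  { pose proof (HM0 a). rewrite Rmin_left, Rmax_right in H by lra. pose proof (Rabs_pos (g0 a)). specialize (H ltac:(lra)). lra. }
  assert (Q0 : 0 <= Q).
  { pose proof (Rabs_pos (RInt (fun x => g x - g0 x) al be)). 
    unfold Q. pose proof (HMp a ltac:(lra)). pose proof (Rabs_pos (p a)).
    pose proof (Rabs_pos (th (S h) - th0 (S h))).
    pose proof (sumL_nonneg (seq 1 h) (fun i => Rabs (v i) * Rabs (th i - th0 i)) ltac:(intros; apply Rmult_le_pos; apply Rabs_pos)).
    apply Rmult_le_pos; [|lra]. apply Rmult_le_pos; lra. }
  assert (L3 : Rabs (be - al) <= b - a).
  { unfold Rabs; destruct Rcase_abs; lra. }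
  eapply Rle_trans. eapply Rle_trans; [apply Rabs_triang|]. apply Rplus_le_compat_r, Rabs_triang.
  pose proof (Rmult_le_compat_l _ _ _ Mg0 L1). pose proof (Rmult_le_compat_l _ _ _ Mg0 L2).
  pose proof (Rmult_le_compat_l _ _ _ Q0 L3). fold Q. nra.
Qed.

Lemma Rmax0_lim s : filterlim (fun u => Rmax u 0) (locally s) (within (fun u => 0 <= u) (locally (Rmax s 0))).
Proof.
  intros P [eps He]. exists eps. intros y Hy. apply He.
  - change (Rabs (Rmax y 0 - Rmax s 0) < eps). change (Rabs (y - s) < eps) in Hy.
    eapply Rle_lt_trans; [|apply Hy]. unfold Rmax; destruct (Rle_dec y 0), (Rle_dec s 0); unfold Rabs; repeat destruct Rcase_abs; repeat match goal with H: ~ _ <= _ |- _ => apply Rnot_le_lt in H end; lra.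
  - apply Rmax_r.
Qed.

Lemma squeeze_cont (G Rf : R -> R) x0 : continuity_pt Rf x0 -> Rf x0 = 0 ->
  (forall s, Rabs (G s - G x0) <= Rf s) -> continuity_pt G x0.
Proof.
  intros HR H0 HB eps Heps. destruct (HR eps Heps) as [del [Hd Hdel]]. exists del; split; auto.
  intros x Hx. specialize (Hdel x Hx). simpl in *. unfold R_dist in *. rewrite H0 in Hdel.
  eapply Rle_lt_trans; [apply HB|]. rewrite Rminus_0_r in Hdel. eapply Rle_lt_trans; [apply Rle_abs|]. auto.
Qed.

Lemma dd_ineq lo hi u : lo < hi -> dd lo hi u * Rabs (hi + lo - 2 * u) <= 2 * Rabs ((u - lo) * (hi - u)).
Proof.
  intros H. unfold dd.
  destruct (Rle_dec u lo) as [H1|H1]; [|destruct (Rle_dec hi u) as [H2|H2]].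
  - rewrite Rmax_left. 2:{ eapply Rle_trans; [apply Rmin_l|lra]. }
    pose proof (Rabs_pos (hi + lo - 2*u)). pose proof (Rabs_pos ((u - lo) * (hi - u))). lra.
  - rewrite Rmax_left. 2:{ eapply Rle_trans; [apply Rmin_r|lra]. }
    pose proof (Rabs_pos (hi + lo - 2*u)). pose proof (Rabs_pos ((u - lo) * (hi - u))). lra.
  - apply Rnot_le_lt in H1. apply Rnot_le_lt in H2.
    rewrite Rabs_mult. rewrite (Rabs_right (u - lo)) by lra. rewrite (Rabs_right (hi - u)) by lra.
    unfold Rmin. destruct (Rle_dec (u - lo) (hi - u)).
    + rewrite Rmax_right by lra. unfold Rabs; destruct Rcase_abs; nra.
    + rewrite Rmax_right by lra. unfold Rabs; destruct Rcase_abs; nra.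
Qed.

Lemma dd_nonneg lo hi u : 0 <= dd lo hi u.
Proof. unfold dd. apply Rmax_l. Qed.

Lemma sumL_cont_in l (F : nat -> R -> R) x :
  (forall i, In i l -> continuity_pt (F i) x) -> continuity_pt (fun y => sumL l (fun i => F i y)) x.
Proof. intros H; induction l; unfold sumL in *; simpl.
  apply continuity_pt_const; intros ? ?; auto.
  apply continuity_pt_plus; auto. apply H; simpl; auto. apply IHl. intros; apply H; simpl; auto. Qed.

Lemma sumL_zero l F : (forall i, In i l -> F i = 0) -> sumL l F = 0.
Proof. intros H; induction l; unfold sumL in *; simpl; auto.
  rewrite H by (simpl; auto). rewrite IHl by (intros; apply H; simpl; auto). ring. Qed.

Lemma init_range (w : nat -> R) th k a b x : 0 < w k -> Iset a b w th k x ->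
  - w k * b < th k < 1 - w k * a.
Proof.
  intros Hw [[H1 H2] [H3 H4]]. unfold psi in *.
  set (q := - / w k * th k) in *.
  assert (E : th k = - w k * q) by (unfold q; field; lra).
  assert (E2 : w k * / w k = 1) by (field; lra).
  rewrite E. split.
  - assert (q < b) by lra. nra.
  - assert (a - q < / w k) by lra. assert (w k * (a - q) < w k * / w k) by (apply Rmult_lt_compat_l; lra). nra.
Qed.

Lemma range_iset (w : nat -> R) th k a b : a < b -> 0 < w k -> - w k * b < th k < 1 - w k * a ->
  exists x, Iset a b w th k x.
Proof.
  intros Hab Hw [H1 H2]. unfold Iset, psi.
  set (q := - / w k * th k).
  assert (E : th k = - w k * q) by (unfold q; field; lra).
  assert (E2 : w k * / w k = 1) by (field; lra).
  assert (Iw : 0 < / w k) by (apply Rinv_0_lt_compat; lra).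
  assert (Q1 : q < b). { rewrite E in H1. nra. }
  assert (Q2 : a < q + / w k). { rewrite E in H2. assert (w k * (a - q) < 1) by lra.
    assert (w k * (a - q) < w k * / w k) by lra. apply Rmult_lt_reg_l in H0; lra. }
  exists ((Rmax q a + Rmin (q + / w k) b) / 2).
  assert (Rmax q a < Rmin (q + / w k) b).
  { unfold Rmax, Rmin; repeat destruct Rle_dec; lra. }
  pose proof (Rmax_l q a). pose proof (Rmax_r q a). pose proof (Rmin_l (q + / w k) b). pose proof (Rmin_r (q + / w k) b).
  repeat split; lra.
Qed.

Theorem lemma2p22 (a b : R) (h : nat) (v w : nat -> R) (f p : R -> R)
  (Theta : R -> nat -> R) (k : nat) :
  a < b ->
  (forall i, (1 <= i <= h)%nat -> 0 < v i /\ 0 < w i) ->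
  (forall x, continuous f x) ->
  (forall x, continuous p x) ->
  (forall x, 0 <= p x) ->
  (forall x, 0 < p x <-> a < x < b) ->
  (forall i, (1 <= i <= S h)%nat -> forall t, 0 <= t ->
     filterlim (fun s => Theta s i) (within (fun s => 0 <= s) (locally t))
       (locally (Theta t i))) ->
  (forall t, 0 <= t -> forall i, (1 <= i <= S h)%nat ->
     Theta t i = Theta 0 i - RInt (fun s => gradL a b h v w f p (Theta s) i) 0 t) ->
  (1 <= k <= h)%nat ->
  (exists x, Iset a b w (Theta 0) k x) ->
  forall t, 0 <= t -> exists x, Iset a b w (Theta t) k x.
Proof.
  intros Hab Hvw Hfc Hpc Hp0 Hpab Hcont Heq Hk Hinit t Ht.
  destruct (Hvw k Hk) as [Hv Hw].
  assert (Hf : contF f) by (intros x; apply continuity_pt_filterlim, Hfc).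
  assert (Hp : contF p) by (intros x; apply continuity_pt_filterlim, Hpc).
  destruct (bound_ex f a b ltac:(lra) Hf) as [Mf HMf].
  destruct (bound_ex p a b ltac:(lra) Hp) as [Mp HMp].
  assert (Mp0 : 0 <= Mp) by (pose proof (HMp a ltac:(lra)); pose proof (Rabs_pos (p a)); lra).
  set (Th := fun s i => Theta (Rmax s 0) i).
  assert (ThC : forall i, (1 <= i <= S h)%nat -> forall s, continuity_pt (fun u => Th u i) s).
  { intros i Hi s. apply continuity_pt_filterlim. unfold Th.
    apply (filterlim_comp R R R (fun u => Rmax u 0) (fun s => Theta s i) (locally s)
      (within (fun u => 0 <= u) (locally (Rmax s 0))) (locally (Theta (Rmax s 0) i))).
    apply Rmax0_lim. apply Hcont; auto. apply Rmax_r. }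
  set (G := fun s => Dk a b h v w f p (Th s) k).
  assert (GC : forall s, continuity_pt G s).
  { intros s0.
    apply (squeeze_cont G (fun s => Mg h v Mf Mp (Th s0) k * (2 * (Rabs (Th s k - Th s0 k) / w k)) +
      (b - a) * (2 * v k * Mp * (Rabs (Th s (S h) - Th s0 (S h)) +
         sumL (seq 1 h) (fun i => Rabs (v i) * Rabs (Th s i - Th s0 i)))))).
    - assert (AC : forall i, (1 <= i <= S h)%nat -> continuity_pt (fun s => Rabs (Th s i - Th s0 i)) s0).
      { intros i Hi. apply (continuity_pt_comp (fun s => Th s i - Th s0 i) Rabs).
        apply continuity_pt_minus. apply ThC; auto. apply continuity_pt_const; intros ? ?; auto.
        apply Rcontinuity_abs. }
      apply continuity_pt_plus. apply continuity_pt_mult. apply continuity_pt_const; intros ? ?; auto.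
      apply continuity_pt_mult. apply continuity_pt_const; intros ? ?; auto.
      unfold Rdiv. apply continuity_pt_mult. apply AC; lia. apply continuity_pt_const; intros ? ?; auto.
      apply continuity_pt_mult. apply continuity_pt_const; intros ? ?; auto.
      apply continuity_pt_mult. apply continuity_pt_const; intros ? ?; auto.
      apply continuity_pt_plus. apply AC; lia.
      apply (sumL_cont_in (seq 1 h) (fun i s => Rabs (v i) * Rabs (Th s i - Th s0 i))).
      intros i Hi. apply in_seq in Hi. apply continuity_pt_mult. apply continuity_pt_const; intros ? ?; auto.
      apply AC; lia.
    - rewrite !Rminus_diag, !Rabs_R0. rewrite sumL_zero. unfold Rdiv; ring.
      intros; rewrite Rminus_diag, Rabs_R0; ring.
    - intros s. unfold G. apply Dk_lip; auto. }
  assert (EqU : forall s, 0 <= s -> Th s k = Th 0 k - RInt G 0 s).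
  { intros s Hs. unfold Th at 1 2. rewrite (Rmax_left s 0) by lra. rewrite (Rmax_left 0 0) by lra.
    rewrite (Heq s Hs k) by lia. f_equal. apply RInt_ext. intros x Hx.
    rewrite Rmin_left, Rmax_right in Hx by lra. unfold G. rewrite gradL_eq by auto. f_equal.
    unfold Th. rewrite (Rmax_left x 0) by lra. reflexivity. }
  set (U := fun s => Th 0 k - RInt G 0 s).
  assert (UD : forall s, derivable_pt_lim U s (0 - G s)).
  { intros s. unfold U.
    apply (derivable_pt_lim_minus (fun _ => Th 0 k) (fun s => RInt G 0 s)).
    apply derivable_pt_lim_const. apply is_derive_Reals.
    apply (is_derive_RInt G (fun b => RInt G 0 b) 0 s).
    exists (mkposreal 1 Rlt_0_1). intros y _. apply (@RInt_correct R_CompleteNormedModule). apply exRI. exact GC.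
    apply continuity_pt_filterlim. apply GC. }
  destruct (bound_ex (fun s => Th s (S h)) 0 t Ht) as [B HB].
  { intros s. apply ThC. lia. }
  set (lo := - w k * b). set (hi := 1 - w k * a).
  assert (Hlh : lo < hi) by (unfold lo, hi; nra).
  set (K := 2 * v k * (B + Vs h v + Mf) * Mp / w k).
  assert (GB : forall s, 0 <= s <= t -> Rabs (G s) <= K * dd lo hi (U s)).
  { intros s Hs. unfold U. rewrite <- EqU by lra. unfold G.
    eapply Rle_trans. apply Dk_bound; auto.
    apply Rmult_le_compat_r. apply dd_nonneg. unfold K, Mg. unfold Rdiv.
    apply Rmult_le_compat_r. left; apply Rinv_0_lt_compat; lra.
    specialize (HB s Hs). simpl in HB. 
    apply Rmult_le_compat_r; auto. apply Rmult_le_compat_l; lra. }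
  assert (K0 : 0 <= K).
  { pose proof (HB 0 ltac:(lra)). pose proof (Rabs_pos (Th 0 (S h))).
    pose proof (HMf a ltac:(lra)). pose proof (Rabs_pos (f a)).
    assert (0 <= Vs h v) by (apply sumL_nonneg; intros; apply Rabs_pos). simpl in *.
    unfold K. apply Rdiv_le_0_compat; [|lra]. apply Rmult_le_pos; auto.
    apply Rmult_le_pos; lra. }
  set (P := fun s => (U s - lo) * (hi - U s)).
  set (dP := fun s => (0 - G s - 0) * (hi - U s) + (U s - lo) * (0 - (0 - G s))).
  assert (PD : forall s, derivable_pt_lim P s (dP s)).
  { intros s. unfold P, dP.
    apply (derivable_pt_lim_mult (fun s => U s - lo) (fun s => hi - U s)).
    apply (derivable_pt_lim_minus U (fun _ => lo)). apply UD. apply derivable_pt_lim_const.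
    apply (derivable_pt_lim_minus (fun _ => hi) U). apply derivable_pt_lim_const. apply UD. }
  set (ex := fun s => exp (4 * K * s)).
  assert (XD : forall s, derivable_pt_lim ex s (exp (4 * K * s) * (4 * K * 1))).
  { intros s. unfold ex.
    apply (derivable_pt_lim_comp (fun s => 4 * K * s) exp).
    apply (derivable_pt_lim_scal id). apply derivable_pt_lim_id. apply derivable_pt_lim_exp. }
  set (E := fun s => P s * P s * ex s).
  set (dE := fun s => (dP s * P s + P s * dP s) * ex s + P s * P s * (exp (4 * K * s) * (4 * K * 1))).
  assert (ED : forall s, derivable_pt_lim E s (dE s)).
  { intros s. unfold E, dE.
    apply (derivable_pt_lim_mult (fun s => P s * P s) ex).
    apply (derivable_pt_lim_mult P P); apply PD. apply XD. }
  assert (dEpos : forall s, 0 <= s <= t -> 0 <= dE s).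
  { intros s Hs. unfold dE, ex.
    pose proof (exp_pos (4 * K * s)) as Hx.
    assert (A1 : Rabs (dP s) <= 2 * K * Rabs (P s)).
    { assert (Eq : dP s = G s * (2 * U s - hi - lo)) by (unfold dP; ring).
      rewrite Eq, Rabs_mult. pose proof (GB s Hs) as H0. pose proof (dd_ineq lo hi (U s) Hlh) as H1.
      replace (Rabs (2 * U s - hi - lo)) with (Rabs (hi + lo - 2 * U s)).
      2:{ rewrite <- Rabs_Ropp. f_equal. ring. }
      pose proof (Rabs_pos (hi + lo - 2 * U s)). pose proof (dd_nonneg lo hi (U s)).
      eapply Rle_trans. apply Rmult_le_compat_r; [auto|apply H0].
      fold (P s) in H1. nra. }
    assert (A2 : - (Rabs (P s) * Rabs (dP s)) <= P s * dP s).
    { rewrite <- Rabs_mult. pose proof (Rle_abs (- (P s * dP s))) as H. rewrite Rabs_Ropp in H. lra. }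
    assert (A3 : Rabs (P s) * Rabs (P s) = P s * P s).
    { rewrite <- Rabs_mult. apply Rabs_right. nra. }
    pose proof (Rabs_pos (P s)).
    assert (0 <= 2 * (P s * dP s) + 4 * K * (P s * P s)) by nra.
    replace ((dP s * P s + P s * dP s) * exp (4 * K * s) + P s * P s * (exp (4 * K * s) * (4 * K * 1)))
      with (exp (4 * K * s) * (2 * (P s * dP s) + 4 * K * (P s * P s))) by ring.
    nra. }
  assert (UT : forall s, 0 <= s -> U s = Theta s k).
  { intros s Hs. unfold U. rewrite <- EqU by lra. unfold Th. rewrite Rmax_left by lra. reflexivity. }
  destruct Hinit as [x0 Hx0]. pose proof (init_range w (Theta 0) k a b x0 Hw Hx0) as IR.
  rewrite <- (UT 0) in IR by lra.
  assert (P0 : 0 < P 0) by (unfold P; fold lo hi in IR; nra).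
  assert (Pc : forall s, continuity_pt P s).
  { intros s. apply (derivable_continuous_pt P s (exist _ (dP s) (PD s))). }
  assert (Ecmp : forall s, 0 < s <= t -> E 0 <= E s).
  { intros s Hs. destruct (MVT_gen E 0 s dE) as [c [Hc Hc2]].
    - intros x Hx. apply is_derive_Reals, ED.
    - intros x _. apply (derivable_continuous_pt E x (exist _ (dE x) (ED x))).
    - rewrite Rmin_left, Rmax_right in Hc by lra. pose proof (dEpos c ltac:(lra)). nra. }
  assert (E0 : 0 < E 0).
  { unfold E, ex. pose proof (exp_pos (4 * K * 0)). apply Rmult_lt_0_compat; nra. }
  assert (Pnz : forall s, 0 <= s <= t -> P s <> 0).
  { intros s Hs HP. destruct (Req_dec s 0) as [->|Hs0]. lra.
    pose proof (Ecmp s ltac:(lra)) as H. unfold E at 2 in H. rewrite HP in H. lra. }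
  assert (Pt : 0 < P t).
  { destruct (Rlt_or_le 0 (P t)) as [|Hle]; auto. exfalso.
    assert (Hlt : P t < 0) by (pose proof (Pnz t ltac:(lra)); lra).
    assert (Ht0 : 0 < t). { destruct (Req_dec t 0) as [->|]; lra. }
    destruct (IVT (fun s => - P s) 0 t) as [z [Hz1 Hz2]].
    - intros y. apply continuity_pt_opp. apply Pc.
    - auto.
    - lra.
    - lra.
    - apply (Pnz z Hz1). lra. }
  apply range_iset; auto. rewrite <- (UT t Ht).
  unfold P in Pt. fold lo hi.
  destruct (Rlt_or_le lo (U t)); destruct (Rlt_or_le (U t) hi); try split; try nra.
Qed.
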